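(* Let $N\ge2$ and consider $\mathbb{C}^{d_1}\otimes\cdots\otimes\mathbb{C}^{d_N}$ with bases $\{\mathbf{G}^{(l)}_i\}$ and constants $\kappa_l\ge1$ as in the context. If an $N$-partite state $\rho$ is fully separable, then its correlation tensor $\mathcal{T}^{(1\cdots N)}$ satisfies $$\big\|\mathcal{T}^{(1\cdots N)}\big\|_{\rm tr}\le\prod_{l=1}^N\sqrt{\frac{d_l^2-d_l}{\kappa_l}}.$$
   Context: For each $l$, $\{\mathbf{G}^{(l)}_i\}_{i=0}^{d_l^2-1}$ is a basis of complex $d_l\times d_l$ matrices with $\mathbf{G}^{(l)}_0=\mathbf{I}_{d_l}$, $\mathrm{Tr}(\mathbf{G}^{(l)}_i)=0$, $\mathrm{Tr}((\mathbf{G}^{(l)}_i)^\dagger\mathbf{G}^{(l)}_{i'})=\kappa_l\delta_{ii'}$ for $i,i'\ge1$, $\kappa_l\ge1$. $\mathcal{T}^{(1\cdots N)}\in\mathbb{C}^{(d_1^2-1)\times\cdots\times(d_N^2-1)}$ has entries $\frac{d_1\cdots d_N}{\kappa_1\cdots\kappa_N}\mathrm{Tr}\big(\rho(\mathbf{G}^{(1)}_{i_1}\otimes\cdots\otimes\mathbf{G}^{(N)}_{i_N})\big)$, $i_l\in\{1,\dots,d_l^2-1\}$. $\rho$ is fully separable if $\rho=\sum_ip_i\rho^{(1)}_i\otimes\cdots\otimes\rho^{(N)}_i$ with $p_i\ge0$, $\sum p_i=1$, $\rho^{(l)}_i$ pure states on $\mathbb{C}^{d_l}$. Index map: $\iota_n^{(D_1,\dots,D_k)}(j_1,\dots,j_k)=(\prod_{s=1}^nD_s)\sum_{s'=n+1}^k((j_{s'}-1)\prod_{s''=s'+1}^kD_{s''})+\sum_{s'=1}^n((j_{s'}-1)\prod_{s''=s'+1}^nD_{s''})+1$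 (empty products $1$, empty sums $0$). For a tensor $\mathcal{A}=(a_{i_1\cdots i_N})\in\mathbb{C}^{D_1\times\cdots\times D_N}$, disjoint nonempty $R=\{r_1<\cdots<r_k\}$, $C=\{c_1<\cdots<c_{N-k}\}$ with $R\cup C=\{1,\dots,N\}$, $n\in\{1,\dots,k\}$, $m\in\{1,\dots,N-k\}$, the mixed unfolding $\mathbf{A}_{(R,n;C,m)}$ is the $(D_{r_1}\cdots D_{r_k})\times(D_{c_1}\cdots D_{c_{N-k}})$ matrix with $a_{i_1\cdots i_N}$ in row $\iota_n^{(D_{r_1},\dots,D_{r_k})}(i_{r_1},\dots,i_{r_k})$ and column $\iota_m^{(D_{c_1},\dots,D_{c_{N-k}})}(i_{c_1},\dots,i_{c_{N-k}})$. The trace norm of the tensor is $\|\mathcal{A}\|_{\rm tr}=\max\|\mathbf{A}_{(R,n;C,m)}\|_{\rm tr}$, the maximum over all such $R,C,n,m$, where for a matrix $\|\mathbf{X}\|_{\rm tr}=\mathrm{Tr}((\mathbf{X}^\dagger\mathbf{X})^{1/2})$. *)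

(* Defs.v *)
(* Complex numbers: an arbitrary numClosedFieldType C
   (the complex numbers are an instance; the statement is algebraic). *)
From HB Require Import structures.
From mathcomp Require Import all_boot all_order all_algebra.
Set Implicit Arguments. Unset Strict Implicit. Unset Printing Implicit Defensive.
Import Order.TTheory GRing.Theory Num.Theory.
Local Open Scope ring_scope.

Section Defs.
Variable C : numClosedFieldType.

Definition adjmx m n (A : 'M[C]_(m, n)) : 'M[C]_(n, m) := (map_mx Num.conj A)^T.

(* trace norm  Tr((X^dagger X)^{1/2}) = sum of the square roots of the
   eigenvalues (with multiplicity) of the PSD matrix X^dagger X *)
Definition eigs n (A : 'M[C]_n) : seq C :=
  sval (closed_field_poly_normal (char_poly A)).
Definition trnorm m n (X : 'M[C]_(m, n)) : C :=
  \sum_(z <- eigs (adjmx X *m X)) sqrtC z.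

Definition pure_state n (A : 'M[C]_n) : Prop :=
  exists v : 'cV[C]_n, adjmx v *m v = 1 /\ A = v *m adjmx v.

Definition midx N (D : 'I_N -> nat) := {dffun forall l : 'I_N, 'I_(D l)}.

(* Operators on C^{d_1} (x) ... (x) C^{d_N}, written in the product basis:
   rho J K is the matrix entry <J| rho |K>. *)
Definition fully_separable N (d : 'I_N -> nat) (rho : midx d -> midx d -> C) : Prop :=
  exists (M : nat) (p : 'I_M -> C) (psi : 'I_M -> forall l : 'I_N, 'M[C]_(d l)),
    [/\ forall i, 0 <= p i,
        \sum_(i < M) p i = 1,
        forall i l, pure_state (psi i l)
      & forall J K, rho J K = \sum_(i < M) p i * \prod_(l < N) psi i l (J l) (K l)].

(* Hypotheses on the basis {G^{(l)}_i}_{i=0}^{d^2-1} of d x d complex matrices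
   (indexed by nat; only i < d^2 matters). *)
Definition GM_basis n (G : nat -> 'M[C]_n) (kappa : C) : Prop :=
  [/\ G 0%N = 1%:M,
      (forall c : nat -> C, \sum_(i < n ^ 2) c i *: G i = 0 ->
          forall i, (i < n ^ 2)%N -> c i = 0),
      (forall i, (1 <= i < n ^ 2)%N -> \tr (G i) = 0),
      (forall i i', (1 <= i < n ^ 2)%N -> (1 <= i' < n ^ 2)%N ->
          \tr (adjmx (G i) *m G i') = if i == i' then kappa else 0)
    & 1 <= kappa].

(* correlation tensor; the 0-based tensor index j_l : 'I_(d_l^2-1) stands for
   the paper's index i_l = j_l + 1 in {1,...,d_l^2-1} *)
Definition corr_tensor N (d : 'I_N -> nat) (G : forall l : 'I_N, nat -> 'M[C]_(d l))
  (kappa : 'I_N -> C) (rho : midx d -> midx d -> C)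
  (j : midx (fun l => (d l ^ 2 - 1)%N)) : C :=
  ((\prod_(l < N) (d l)%:R) / \prod_(l < N) kappa l) *
  \sum_(J : midx d) \sum_(K : midx d)
     rho J K * \prod_(l < N) G l (j l).+1 (K l) (J l).

(* The index map iota_n^{(D_1..D_k)}(j_1..j_k) minus 1, with 0-based
   positions s and 0-based digits e_s = j_s - 1. *)
Definition iota_map (n : nat) (Ds es : seq nat) : nat :=
  let k := size Ds in
  ((\prod_(0 <= s < n) nth 0 Ds s) *
     \sum_(n <= s' < k) (nth 0 es s' * \prod_(s'.+1 <= s'' < k) nth 0 Ds s'') +
   \sum_(0 <= s' < n) (nth 0 es s' * \prod_(s'.+1 <= s'' < n) nth 0 Ds s''))%N.

(* mixed unfolding A_(R,n;C,m), C = complement of R; rows/columns 0-based.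
   enum R lists r_1 < ... < r_k in increasing order. *)
Definition mixed_unfolding N (D : 'I_N -> nat) (A : midx D -> C)
  (R : {set 'I_N}) (n m : nat) :
  'M[C]_(\prod_(r in R) D r, \prod_(c in ~: R) D c) :=
  \matrix_(p, q) \sum_(i : midx D |
      (iota_map n [seq D r | r <- enum R] [seq nat_of_ord (i r) | r <- enum R] == p)
   && (iota_map m [seq D c | c <- enum (~: R)] [seq nat_of_ord (i c) | c <- enum (~: R)] == q))
      A i.

(* tensor trace norm: maximum over all R, C nonempty, n in 1..|R|, m in 1..|C|
   (all candidates are nonnegative reals) *)
Definition tensor_trnorm N (D : 'I_N -> nat) (A : midx D -> C) : C :=
  \big[Num.max/0]_(R : {set 'I_N} | (R != set0) && (R != setT))
    \big[Num.max/0]_(n < #|R|) \big[Num.max/0]_(m < #|~: R|)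
       trnorm (mixed_unfolding A R n.+1 m.+1).

End Defs.

(* Main.v *)
Require Import Defs.
From HB Require Import structures.
From mathcomp Require Import all_boot all_order all_algebra.
From mathcomp Require Import ring zify spectral.
Set Implicit Arguments. Unset Strict Implicit. Unset Printing Implicit Defensive.
Import Order.TTheory GRing.Theory Num.Theory.
Local Open Scope ring_scope.

Section Bessel.
Variable C : numClosedFieldType.

Lemma sum_norm2_ge0 (I : finType) (a : I -> C) : 0 <= \sum_i `|a i| ^+ 2.
Proof. by apply: sumr_ge0 => i _; rewrite exprn_ge0. Qed.

Lemma bessel (I J : finType) (s : J -> I -> C) (a : I -> C) :
  (forall j j', j != j' -> \sum_i (s j i)^* * s j' i = 0) ->
  (forall j, \sum_i (s j i)^* * s j i = 1 \/ forall i, s j i = 0) ->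
  \sum_j `|\sum_i (s j i)^* * a i| ^+ 2 <= \sum_i `|a i| ^+ 2.
Proof.
move=> orth nrm.
set c := fun j => \sum_i (s j i)^* * a i.
set b := fun i => \sum_j c j * s j i.
set T := \sum_j `|c j| ^+ 2.
have T_ge0 : 0 <= T by apply: sum_norm2_ge0.
have h1 : \sum_i (b i)^* * a i = T.
  rewrite /T /b; under eq_bigr do rewrite rmorph_sum /= mulr_suml.
  rewrite exchange_big /=; apply: eq_bigr => j _.
  rewrite normCK mulrC /c mulr_sumr; apply: eq_bigr => i _.
  by rewrite rmorphM /=; ring.
have h2 : \sum_i (b i)^* * b i = T.
  rewrite /T /b.
  transitivity (\sum_j \sum_j' (c j)^* * c j' * \sum_i (s j i)^* * s j' i).
    under eq_bigr do rewrite rmorph_sum /= mulr_suml.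
    rewrite exchange_big /=; apply: eq_bigr => j _.
    under eq_bigr do rewrite mulr_sumr.
    rewrite exchange_big /=; apply: eq_bigr => j' _.
    rewrite mulr_sumr; apply: eq_bigr => i _.
    by rewrite rmorphM /=; ring.
  apply: eq_bigr => j _; rewrite (bigD1 j) //= [X in _ + X]big1 ?addr0; last first.
    by move=> j' ne; rewrite orth 1?eq_sym // mulr0.
  idtac.
  case: (nrm j) => [->|z]; first by rewrite mulr1 normCK mulrC.
  have -> : c j = 0 by rewrite /c big1 // => i _; rewrite z rmorph0 mul0r.
  by rewrite rmorph0 !mul0r normr0 expr2 mul0r.
have h3 : \sum_i (a i)^* * b i = T.
  rewrite -(conj_Creal (ger0_real T_ge0)) -h1 rmorph_sum; apply: eq_bigr => i _.
  by rewrite rmorphM /= conjCK mulrC.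
have : 0 <= \sum_i `|a i - b i| ^+ 2 by apply: sum_norm2_ge0.
have -> : \sum_i `|a i - b i| ^+ 2 = \sum_i `|a i| ^+ 2 - T.
  transitivity (\sum_i `|a i| ^+ 2 - \sum_i (b i)^* * a i - \sum_i (a i)^* * b i
                 + \sum_i (b i)^* * b i).
    rewrite -!sumrB -big_split /=; apply: eq_bigr => i _.
    rewrite !normCK rmorphB /=; ring.
  by rewrite h1 h2 h3; ring.
by rewrite subr_ge0.
Qed.

Lemma cauchy_sq (I : finType) (x y : I -> C) :
  `|\sum_i x i * y i| ^+ 2 <= (\sum_i `|x i| ^+ 2) * (\sum_i `|y i| ^+ 2).
Proof.
set ny := \sum_i `|y i| ^+ 2.
have ny_ge0 : 0 <= ny by apply: sum_norm2_ge0.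
have [ny0|nyn0] := eqVneq ny 0.
  have y0 : forall i, y i = 0.
    move=> i; have /psumr_eq0P := ny0.
    move=> /(_ (fun i _ => exprn_ge0 2 (normr_ge0 (y i)))) /(_ i isT) /eqP.
    by rewrite expf_eq0 /= normr_eq0 => /eqP.
  rewrite big1 ?normr0 ?expr2 ?mul0r ?ny0 ?mulr0 // => i _.
  by rewrite y0 mulr0.
have ny_gt0 : 0 < ny by rewrite lt_def nyn0.
set r := sqrtC ny.
have r_gt0 : 0 < r by rewrite sqrtC_gt0.
have rc : r^* = r by rewrite conj_Creal // ger0_real // ltW.
have := @bessel I 'I_1 (fun _ i => (y i)^* / r) x.
rewrite big_ord1.
have -> : \sum_i ((y i)^* / r)^* * x i = (\sum_i x i * y i) / r.
  rewrite mulr_suml; apply: eq_bigr => i _.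
  by rewrite rmorphM /= conjCK fmorphV /= rc; ring.
rewrite normrM normfV (gtr0_norm r_gt0) expr_div_n sqrtCK.
rewrite ler_pdivrMr // => h; apply: h.
  by move=> j j'; rewrite !ord1 eqxx.
move=> _; left.
under eq_bigr do rewrite rmorphM /= conjCK fmorphV /= rc.
transitivity (ny / (r * r)).
  rewrite /ny mulr_suml; apply: eq_bigr => i _; rewrite normCK invfM; ring.
by rewrite -expr2 sqrtCK divff.
Qed.

Lemma cauchy (I : finType) (x y : I -> C) :
  `|\sum_i x i * y i| <= sqrtC (\sum_i `|x i| ^+ 2) * sqrtC (\sum_i `|y i| ^+ 2).
Proof.
rewrite -sqrtCM ?nnegrE ?sum_norm2_ge0 //.
rewrite -[X in X <= _]sqrCK // ler_sqrtC ?nnegrE ?exprn_ge0 ?mulr_ge0 ?sum_norm2_ge0 //.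
exact: cauchy_sq.
Qed.
End Bessel.

Section TR.
Variable C : numClosedFieldType.

Lemma char_poly_conj n (P D : 'M[C]_n) : P \in unitmx ->
  char_poly (invmx P *m D *m P) = char_poly D.
Proof.
move=> Pu; rewrite /char_poly /char_poly_mx.
set Q := map_mx polyC P; set Qi := map_mx polyC (invmx P).
have QiQ : Qi *m Q = 1%:M by rewrite /Qi /Q -map_mxM mulVmx // map_mx1.
have -> : 'X%:M - map_mx polyC (invmx P *m D *m P) =
          Qi *m ('X%:M - map_mx polyC D) *m Q.
  rewrite mulmxBr mulmxBl !map_mxM -/Q -/Qi; congr (_ - _).
  by rewrite -mulmxA -scalar_mxC mulmxA QiQ mul1mx.
rewrite !det_mulmx mulrC mulrA -det_mulmx.
by rewrite -map_mxM mulmxV // map_mx1 det1 mul1r.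
Qed.


Lemma trnorm_eigs m n (X : 'M[C]_(m, n)) :
  let H := adjmx X *m X in
  H = invmx (spectralmx H) *m diag_mx (spectral_diag H) *m spectralmx H ->
  trnorm X = \sum_i sqrtC (spectral_diag H 0 i).
Proof.
move=> H HP; rewrite /trnorm -/H /eigs.
case: closed_field_poly_normal => r /= hr.
have: perm_eq r [seq spectral_diag H 0 i | i <- index_enum 'I_n].
  apply: prod_XsubC_eq; rewrite big_map.
  have := hr; rewrite (monicP (char_poly_monic _)) scale1r => <-.
  rewrite {1}HP char_poly_conj ?spectral_unit //.
  by rewrite char_poly_trig //; apply: eq_bigr => i _; rewrite mxE eqxx mulr1n.
move=> hp; rewrite (perm_big _ hp) big_map; exact: eq_bigr.
Qed.

Lemma trnorm_le_ab m n (K : finType) (a : K -> 'I_m -> C) (b : K -> 'I_n -> C) :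
  trnorm (\matrix_(p, q) \sum_k a k p * b k q) <=
  \sum_k sqrtC (\sum_p `|a k p| ^+ 2) * sqrtC (\sum_q `|b k q| ^+ 2).
Proof.
set X := \matrix_(p, q) _.
set H := adjmx X *m X.
have adjE : forall m' n' (A : 'M[C]_(m', n')), adjmx A = map_mx Num.conj (A^T).
  by move=> *; rewrite /adjmx map_trmx.
have Ht : map_mx Num.conj (H^T) = H.
  apply/matrixP => i j; rewrite !mxE /H rmorph_sum; apply: eq_bigr => p _.
  by rewrite /adjmx !mxE rmorphM /= conjCK mulrC.
have Hn : H \is normalmx by apply/normalmxP; rewrite Ht.
have HP : H = invmx (spectralmx H) *m diag_mx (spectral_diag H) *m spectralmx H by apply/orthomx_spectralP.
rewrite (trnorm_eigs HP).
set P := spectralmx H; set sp := spectral_diag H.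
have Pu : P \is unitarymx := spectral_unitarymx H.
have PPt : P *m map_mx Num.conj (P^T) = 1%:M := unitarymxP Pu.
have Punit : P \in unitmx := unitarymx_unit Pu.
set W := X *m map_mx Num.conj (P^T).
have WW : map_mx Num.conj (W^T) *m W = diag_mx sp.
  rewrite /W trmx_mul map_mxM trmxCK -(adjE _ _ X).
  rewrite mulmxA -[P *m _ *m X]mulmxA -/H.
  rewrite [X in P *m X *m _]HP.
  rewrite !mulmxA mulmxV // mul1mx -mulmxA PPt mulmx1 //.
have Wentry : forall p i, W p i = \sum_q X p q * (P i q)^*.
  by move=> p i; rewrite !mxE; apply: eq_bigr => q _; rewrite !mxE.
have lam : forall i j, \sum_p (W p i)^* * W p j = if i == j then sp 0 i else 0.
  move=> i j; have := congr1 (fun M : 'M[C]_n => M i j) WW; rewrite !mxE => h.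
  transitivity (sp 0 i *+ (i == j)); last by case: eqP; rewrite ?mulr1n ?mulr0n.
  by rewrite -h; apply: eq_bigr => p _; rewrite !mxE.
have lam_ge0 : forall i, 0 <= sp 0 i.
  move=> i; have := lam i i; rewrite eqxx => <-.
  by apply: sumr_ge0 => p _; rewrite -normCKC exprn_ge0.
pose mu i := if sp 0 i == 0 then 0 else (sqrtC (sp 0 i))^-1.
pose s i p := mu i * W p i.
have muc : forall i, (mu i)^* = mu i.
  move=> i; rewrite /mu; case: eqP => _; first by rewrite rmorph0.
  by rewrite fmorphV /= conj_Creal // sqrtC_real.
have sq : forall i, sqrtC (sp 0 i) = \sum_p (s i p)^* * W p i.
  move=> i; transitivity (mu i * sp 0 i).
    rewrite /mu; case: eqP => [->|/eqP nz]; first by rewrite sqrtC0 mul0r.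
    have e : sp 0 i = sqrtC (sp 0 i) * sqrtC (sp 0 i) by rewrite -expr2 sqrtCK.
    set r := sqrtC (sp 0 i); rewrite [in RHS]e mulKf // sqrtC_eq0 //.
  have := lam i i; rewrite eqxx => <-; rewrite mulr_sumr; apply: eq_bigr => p _.
  by rewrite /s /= rmorphM /= muc mulrA.
have decomp : forall i, \sum_p (s i p)^* * W p i =
    \sum_k (\sum_p (s i p)^* * a k p) * (\sum_q (P i q)^* * b k q).
  move=> i.
  transitivity (\sum_p \sum_q \sum_k (s i p)^* * a k p * ((P i q)^* * b k q)).
    apply: eq_bigr => p _; rewrite Wentry mulr_sumr; apply: eq_bigr => q _.
    rewrite !mxE mulr_suml mulr_sumr; apply: eq_bigr => k _; ring.
  under eq_bigr do rewrite exchange_big /=.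
  rewrite exchange_big /=; apply: eq_bigr => k _.
  rewrite big_distrl /=; apply: eq_bigr => p _; rewrite big_distrr //.
have tr_ge0 : 0 <= \sum_i sqrtC (sp 0 i).
  by apply: sumr_ge0 => i _; rewrite sqrtC_ge0.
apply: (le_trans (real_ler_norm (ger0_real tr_ge0))).
have -> : \sum_i sqrtC (sp 0 i) =
   \sum_k \sum_i (\sum_p (s i p)^* * a k p) * (\sum_q (P i q)^* * b k q).
  by rewrite exchange_big; apply: eq_bigr => i _; rewrite sq decomp.
apply: (le_trans (ler_norm_sum _ _ _)); apply: ler_sum => k _.
apply: (le_trans (cauchy _ _)).
have bs : \sum_i `|\sum_p (s i p)^* * a k p| ^+ 2 <= \sum_p `|a k p| ^+ 2.
  apply: bessel => [i j ne|i].
    rewrite /s /=; under eq_bigr do rewrite rmorphM /= muc mulrACA.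
    by rewrite -mulr_sumr lam (negPf ne) mulr0.
  rewrite /s /mu /=; case: eqP => [z|/eqP nz]; first by right => p; rewrite mul0r.
  left; under eq_bigr do rewrite rmorphM /= mulrACA.
  rewrite -mulr_sumr lam eqxx fmorphV /= conj_Creal ?sqrtC_real //.
  rewrite -invfM -expr2 sqrtCK mulVf //.
have bp : \sum_i `|\sum_q (P i q)^* * b k q| ^+ 2 <= \sum_q `|b k q| ^+ 2.
  apply: bessel => [i j ne|i].
    have := congr1 (fun M : 'M[C]_n => M j i) PPt; rewrite !mxE => h.
    transitivity ((j == i)%:R : C); last by rewrite eq_sym (negPf ne).
    by rewrite -h; apply: eq_bigr => q _; rewrite !mxE mulrC.
  left; have := congr1 (fun M : 'M[C]_n => M i i) PPt; rewrite !mxE => h.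
  transitivity ((i == i)%:R : C); last by rewrite eqxx.
  by rewrite -h; apply: eq_bigr => q _; rewrite !mxE mulrC.
apply: ler_pM; rewrite ?sqrtC_ge0 ?sum_norm2_ge0 //.
  by rewrite ler_sqrtC ?nnegrE ?sum_norm2_ge0.
by rewrite ler_sqrtC ?nnegrE ?sum_norm2_ge0.
Qed.

Lemma trnorm_le_rank1 m n (K : finType) (Y : K -> 'I_m -> 'I_n -> C) :
  (forall k p q p' q', Y k p q * Y k p' q' = Y k p q' * Y k p' q) ->
  trnorm (\matrix_(p, q) \sum_k Y k p q) <=
  \sum_k sqrtC (\sum_p \sum_q `|Y k p q| ^+ 2).
Proof.
move=> r1.
pose a k p := if [pick pq : 'I_m * 'I_n | Y k pq.1 pq.2 != 0] is Some pq
              then Y k p pq.2 else 0.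
pose b k q := if [pick pq : 'I_m * 'I_n | Y k pq.1 pq.2 != 0] is Some pq
              then Y k pq.1 q / Y k pq.1 pq.2 else 0.
have ab : forall k p q, Y k p q = a k p * b k q.
  move=> k p q; rewrite /a /b; case: pickP => [[p0 q0] /= nz|z].
    rewrite mulrA -r1 -mulrA divff ?mulr1 //.
  by have := z (p, q); rewrite /= => /negbFE /eqP ->; rewrite mul0r.
have -> : \matrix_(p, q) \sum_k Y k p q = \matrix_(p, q) \sum_k a k p * b k q.
  by apply/matrixP => p q; rewrite !mxE; apply: eq_bigr => k _; rewrite ab.
apply: (le_trans (trnorm_le_ab a b)); rewrite le_eqVlt; apply/orP; left; apply/eqP.
apply: eq_bigr => k _; rewrite -sqrtCM ?nnegrE ?sum_norm2_ge0 //; congr sqrtC.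
rewrite big_distrl /=; apply: eq_bigr => p _; rewrite big_distrr /=.
by apply: eq_bigr => q _; rewrite ab normrM exprMn.
Qed.

End TR.

Section T1.
Variable C : numClosedFieldType.

Lemma sum_prod_midx N (D : 'I_N -> nat) (f : forall l : 'I_N, 'I_(D l) -> C) :
  \sum_(J : midx D) \prod_l f l (J l) = \prod_l \sum_(a : 'I_(D l)) f l a.
Proof.
pose T_ := fun l : 'I_N => ('I_(D l) : finType).
pose P_ := fun l : 'I_N => [ffun x : T_ l => f l x].
rewrite (reindex (@dffun_of_fprod _ T_)); last first.
  exact/onW_bij/dffun_of_fprod_bij.
transitivity (\sum_(t : fprod T_) \prod_(l in 'I_N) P_ l (t l)).
  by apply: eq_bigr => t _; apply: eq_bigr => l _; rewrite /P_ !ffunE.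
rewrite big_fprod.
transitivity (\prod_l \sum_(j in tagged_with T_ l) untag 0 (P_ l) j).
  exact/esym/bigA_distr_big_dep.
apply: eq_bigr => l _.
transitivity (\sum_(x : T_ l) P_ l x); last by apply: eq_bigr => x _; rewrite /P_ ffunE.
exact/esym/(big_tag (fun l x => P_ l x)).
Qed.
End T1.

Local Close Scope ring_scope.

Section Radix.
Variable Dd : nat -> nat.

Definition rval a b (e : nat -> nat) :=
  \sum_(a <= s < b) e s * \prod_(s.+1 <= t < b) Dd t.

Lemma rval_rec a b e : a <= b -> rval a b.+1 e = rval a b e * Dd b + e b.
Proof.
move=> ab; rewrite /rval big_nat_recr //= [X in _ + e b * X]big_geq // muln1.
congr (_ + _).
rewrite big_distrl /=; apply: eq_big_nat => s /andP[_ sb].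
by rewrite big_nat_recr //= mulnA.
Qed.

Lemma rval_lt a b e : (forall s, a <= s < b -> e s < Dd s) ->
  rval a b e < \prod_(a <= s < b) Dd s.
Proof.
elim: b => [|b IH] h; first by rewrite /rval !big_geq.
case: (leqP a b) => ab; last by rewrite /rval !big_geq.
rewrite rval_rec // big_nat_recr //=.
have h1 : rval a b e < \prod_(a <= s < b) Dd s.
  by apply: IH => s /andP[hs1 sb]; apply: h; rewrite hs1 ltnW.
have h2 : e b < Dd b by apply: h; rewrite ab leqnn.
set P := \prod_(a <= s < b) Dd s in h1 *; set r := rval a b e in h1 *.
nia.
Qed.

Lemma rval_inj a b e e' : (forall s, a <= s < b -> e s < Dd s) ->
  (forall s, a <= s < b -> e' s < Dd s) ->
  rval a b e = rval a b e' -> forall s, a <= s < b -> e s = e' s.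
Proof.
elim: b => [|b IH] h h' eq s; first by rewrite ltn0 andbF.
case: (leqP a b) => ab; last by move=> /andP[hs1 sb]; lia.
have hb : e b < Dd b by apply: h; rewrite ab leqnn.
have hb' : e' b < Dd b by apply: h'; rewrite ab leqnn.
move: eq; rewrite !rval_rec // => eq.
have em : e b = e' b.
  have := congr1 (modn^~ (Dd b)) eq.
  by rewrite !modnMDl !modn_small.
have ev : rval a b e = rval a b e'.
  have := congr1 (divn^~ (Dd b)) eq.
  have Dp : 0 < Dd b by apply: leq_ltn_trans hb.
  by rewrite !divnMDl // !divn_small // !addn0.
move=> /andP[hs1]; rewrite ltnS leq_eqVlt => /orP[/eqP ->|sb] //.
apply: IH => // [t /andP[ht1 tb]|t /andP[ht1 tb]|]; last by rewrite hs1 sb.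
  by apply: h; rewrite ht1 ltnW.
by apply: h'; rewrite ht1 ltnW.
Qed.
End Radix.

Lemma iota_map_inj n Ds es es' : n <= size Ds -> size es = size Ds -> size es' = size Ds ->
  (forall s, s < size Ds -> nth 0 es s < nth 0 Ds s) ->
  (forall s, s < size Ds -> nth 0 es' s < nth 0 Ds s) ->
  iota_map n Ds es = iota_map n Ds es' -> es = es'.
Proof.
move=> nk se se' h h'.
have iE : forall e, iota_map n Ds e = (\prod_(0 <= s < n) nth 0 Ds s) *
   rval (nth 0 Ds) n (size Ds) (nth 0 e) + rval (nth 0 Ds) 0 n (nth 0 e) by [].
rewrite !iE.
set P := \prod_(0 <= s < n) nth 0 Ds s => eq.
have hl : forall s, 0 <= s < n -> nth 0 es s < nth 0 Ds s.
  by move=> s /andP[_ sn]; apply: h; apply: leq_trans nk.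
have hl' : forall s, 0 <= s < n -> nth 0 es' s < nth 0 Ds s.
  by move=> s /andP[_ sn]; apply: h'; apply: leq_trans nk.
have lt1 := rval_lt hl; have lt2 := rval_lt hl'.
have Pp : 0 < P by apply: leq_ltn_trans lt1.
have elo : rval (nth 0 Ds) 0 n (nth 0 es) = rval (nth 0 Ds) 0 n (nth 0 es').
  have := congr1 (modn^~ P) eq; rewrite /=.
  by rewrite ![P * _]mulnC !modnMDl !modn_small.
have ehi : rval (nth 0 Ds) n (size Ds) (nth 0 es) = rval (nth 0 Ds) n (size Ds) (nth 0 es').
  have := congr1 (divn^~ P) eq.
  by rewrite ![P * _]mulnC !divnMDl // !divn_small // !addn0.
have e1 := rval_inj hl hl' elo.
have e2 : forall s, n <= s < size Ds -> nth 0 es s = nth 0 es' s.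
  apply: (rval_inj _ _ ehi).
    by move=> s /andP[_ sk]; apply: h.
  by move=> s /andP[_ sk]; apply: h'.
apply: (@eq_from_nth _ 0); first by rewrite se se'.
move=> i; rewrite se => ik; case: (ltnP i n) => ni.
  by apply: e1; rewrite ni.
by apply: e2; rewrite ni ik.
Qed.

Local Open Scope ring_scope.

Section U.
Variables (C : numClosedFieldType) (N : nat) (D : 'I_N -> nat) (R : {set 'I_N}) (n m : nat).
Hypotheses (hn : (n <= #|R|)%N) (hm : (m <= #|~: R|)%N).

Definition fR (j : midx D) := iota_map n [seq D r | r <- enum R] [seq nat_of_ord (j r) | r <- enum R].
Definition gR (j : midx D) := iota_map m [seq D c | c <- enum (~: R)] [seq nat_of_ord (j c) | c <- enum (~: R)].

Lemma digits_lt (j : midx D) (s : seq 'I_N) i : (i < size [seq D r | r <- s])%N ->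
  (nth 0%N [seq nat_of_ord (j r) | r <- s] i < nth 0%N [seq D r | r <- s] i)%N.
Proof.
rewrite size_map; elim: s i => [|x s IH] i //=.
case: i => [|i] /=; first by move=> _; exact: ltn_ord.
by rewrite ltnS; apply: IH.
Qed.

Lemma map_eq_on (j j' : midx D) (s : seq 'I_N) :
  [seq nat_of_ord (j r) | r <- s] = [seq nat_of_ord (j' r) | r <- s] ->
  forall r, r \in s -> j r = j' r.
Proof. by move=> /eq_in_map h r rs; apply: val_inj; apply: h. Qed.

Lemma fg_inj j j' : fR j = fR j' -> gR j = gR j' -> j = j'.
Proof.
rewrite /fR /gR => ef eg.
have e1 : [seq nat_of_ord (j r) | r <- enum R] = [seq nat_of_ord (j' r) | r <- enum R].
  by apply: (iota_map_inj _ _ _ (@digits_lt j _) (@digits_lt j' _) ef); rewrite ?size_map -?cardE.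
have e2 : [seq nat_of_ord (j r) | r <- enum (~: R)] = [seq nat_of_ord (j' r) | r <- enum (~: R)].
  by apply: (iota_map_inj _ _ _ (@digits_lt j _) (@digits_lt j' _) eg); rewrite ?size_map -?cardE.
apply/ffunP => l; case: (boolP (l \in R)) => lR.
  by apply: (map_eq_on e1); rewrite mem_enum.
by apply: (map_eq_on e2); rewrite mem_enum inE.
Qed.

Definition mix (j j' : midx D) : midx D := finfun (fun l => if l \in R then j l else j' l).

Lemma f_mix j j' : fR (mix j j') = fR j.
Proof.
rewrite /fR; congr iota_map; apply/eq_in_map => r; rewrite mem_enum => rR.
by rewrite ffunE rR.
Qed.

Lemma g_mix j j' : gR (mix j j') = gR j'.
Proof.
rewrite /gR; congr iota_map; apply/eq_in_map => r; rewrite mem_enum inE => rR.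
by rewrite ffunE (negPf rR).
Qed.

Definition Zc (h : midx D -> C) (p q : nat) :=
  \sum_(j : midx D | (fR j == p) && (gR j == q)) h j.

Lemma pickS p q j : (fR j == p) && (gR j == q) ->
  [pick j | (fR j == p) && (gR j == q)] = Some j.
Proof.
move=> c; case: pickP => [j' c'|nc]; last by rewrite nc in c.
congr Some; move: c c' => /andP[/eqP f1 /eqP g1] /andP[/eqP f2 /eqP g2].
by apply: fg_inj; rewrite ?f1 ?f2 ?g1 ?g2.
Qed.

Lemma Zc_pick h p q : Zc h p q =
  if [pick j | (fR j == p) && (gR j == q)] is Some j then h j else 0.
Proof.
rewrite /Zc; case: pickP => [j0 c0|nc]; last by rewrite big_pred0.
rewrite (big_pred1 j0) // => j; apply/idP/eqP => [c|->//].
by have := pickS c; rewrite (pickS c0) => -[].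
Qed.

Lemma Zc_rank1 (x : forall l, 'I_(D l) -> C) p q p' q' :
  let h := fun j : midx D => \prod_l x l (j l) in
  Zc h p q * Zc h p' q' = Zc h p q' * Zc h p' q.
Proof.
move=> h; rewrite !Zc_pick.
case: (pickP (fun j => (fR j == p) && (gR j == q))) => [j1 c1|n1];
case: (pickP (fun j => (fR j == p') && (gR j == q'))) => [j2 c2|n2].
- move: (c1) (c2) => /andP[/eqP f1 /eqP g1] /andP[/eqP f2 /eqP g2].
  rewrite (@pickS p q' (mix j1 j2)); last by rewrite f_mix g_mix f1 g2 !eqxx.
  rewrite (@pickS p' q (mix j2 j1)); last by rewrite f_mix g_mix f2 g1 !eqxx.
  rewrite /h -!big_split /=; apply: eq_bigr => l _; rewrite !ffunE.
  by case: (l \in R) => //; rewrite mulrC.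
- rewrite mulr0.
  case: (pickP (fun j => (fR j == p) && (gR j == q'))) => [k1 d1|]; last by rewrite mul0r.
  case: (pickP (fun j => (fR j == p') && (gR j == q))) => [k2 d2|]; last by rewrite mulr0.
  move: d1 d2 => /andP[/eqP f1 /eqP g1] /andP[/eqP f2 /eqP g2].
  by have := n2 (mix k2 k1); rewrite f_mix g_mix f2 g1 !eqxx.
- rewrite mul0r.
  case: (pickP (fun j => (fR j == p) && (gR j == q'))) => [k1 d1|]; last by rewrite mul0r.
  case: (pickP (fun j => (fR j == p') && (gR j == q))) => [k2 d2|]; last by rewrite mulr0.
  move: d1 d2 => /andP[/eqP f1 /eqP g1] /andP[/eqP f2 /eqP g2].
  by have := n1 (mix k1 k2); rewrite f_mix g_mix f1 g2 !eqxx.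
- rewrite mul0r.
  case: (pickP (fun j => (fR j == p) && (gR j == q'))) => [k1 d1|]; last by rewrite mul0r.
  case: (pickP (fun j => (fR j == p') && (gR j == q))) => [k2 d2|]; last by rewrite mulr0.
  move: d1 d2 => /andP[/eqP f1 /eqP g1] /andP[/eqP f2 /eqP g2].
  by have := n1 (mix k1 k2); rewrite f_mix g_mix f1 g2 !eqxx.
Qed.

Lemma one_hot (M : nat) (k : nat) (c : C) : 0 <= c ->
  \sum_(q < M) (if k == q then c else 0) <= c.
Proof.
move=> c0; case: (ltnP k M) => kM.
  rewrite (bigD1 (Ordinal kM)) //= eqxx big1 ?addr0 // => q qne.
  case: eqP => // e; move: qne; have -> : q = Ordinal kM by apply: val_inj.
  by rewrite eqxx.
rewrite big1 // => q _; rewrite gtn_eqF //; exact: leq_trans (ltn_ord q) kM.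
Qed.

Lemma Zc_frob (h : midx D -> C) (M1 M2 : nat) :
  \sum_(p < M1) \sum_(q < M2) `|Zc h p q| ^+ 2 <= \sum_j `|h j| ^+ 2.
Proof.
have e : forall p q, `|Zc h p q| ^+ 2 = Zc (fun j => `|h j| ^+ 2) p q.
  move=> p q; rewrite !Zc_pick; case: pickP => // _.
  by rewrite normr0 expr2 mulr0.
under eq_bigr do under eq_bigr do rewrite e /Zc big_mkcond.
under eq_bigr do rewrite exchange_big /=.
rewrite exchange_big /=; apply: ler_sum => j _.
have c0 : 0 <= `|h j| ^+ 2 by rewrite exprn_ge0.
apply: (@le_trans _ _ (\sum_(p < M1) (if fR j == p then `|h j| ^+ 2 else 0))).
  apply: ler_sum => p _; case: (fR j == p) => /=; first exact: one_hot.
  by rewrite big1.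
exact: one_hot.
Qed.

End U.

Section B.
Variable C : numClosedFieldType.

Lemma big_opt (T : finType) (F : option T -> C) :
  \sum_x F x = F None + \sum_x F (Some x).
Proof.
rewrite (bigD1 None) //=; congr (_ + _).
rewrite (reindex_omap Some (fun o => o)) /=; last by case.
by apply: eq_bigl => x; rewrite eqxx.
Qed.

Lemma sum_pair (I J : finType) (F : I * J -> C) :
  \sum_p F p = \sum_a \sum_b F (a, b).
Proof. by rewrite pair_bigA; apply: eq_bigr => -[]. Qed.

Lemma sum_delta (I : finType) (a : I) (F : I -> C) :
  \sum_b (a == b)%:R * F b = F a.
Proof.
rewrite (bigD1 a) //= eqxx mul1r big1 ?addr0 // => b ba.
by rewrite eq_sym (negPf ba) mul0r.
Qed.

Lemma conj_sqrt (x : C) : 0 <= x -> (sqrtC x)^* = sqrtC x.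
Proof. by move=> x0; rewrite conj_Creal // sqrtC_real. Qed.

Lemma norm_inv_sqrt (x : C) : 0 <= x -> `|(sqrtC x)^-1| ^+ 2 = x^-1.
Proof.
move=> x0; rewrite normfV ger0_norm ?sqrtC_ge0 //.
have e : x = sqrtC x ^+ 2 by rewrite sqrtCK.
by rewrite {2}e exprVn.
Qed.

Lemma bloch d (G : nat -> 'M[C]_d) (kappa : C) (psi : 'M[C]_d) :
  GM_basis G kappa -> pure_state psi ->
  \sum_(k < (d ^ 2 - 1)%N)
     `|d%:R / kappa * \sum_a \sum_b psi a b * G k.+1 b a| ^+ 2
  <= (d ^ 2 - d)%:R / kappa.
Proof.
case=> [G0 _ trG orthG k1] [v [nv ->]].
have vn : \sum_a `|v a 0| ^+ 2 = 1.
  transitivity ((adjmx v *m v) 0 0); last by rewrite nv mxE eqxx.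
  by rewrite mxE; apply: eq_bigr => a _; rewrite /adjmx !mxE normCKC.
have dpos : (0 < d)%N.
  by case: d G psi v nv vn {trG orthG G0} => // G psi v nv; rewrite big_ord0 => /eqP; rewrite eq_sym oner_eq0.
have kpos : 0 < kappa by apply: lt_le_trans k1; exact: ltr01.
have dR : 0 < (d%:R : C) by rewrite ltr0n.
have psiE : forall a b, (v *m adjmx v) a b = v a 0 * (v b 0)^*.
  by move=> a b; rewrite !mxE big_ord1 /adjmx !mxE.
set E := (d ^ 2 - 1)%N.
set t := fun k : 'I_E => \sum_a \sum_b (v *m adjmx v) a b * G k.+1 b a.
set sd := sqrtC (d%:R : C); set sk := sqrtC kappa.
have sd0 : sd != 0 by rewrite sqrtC_eq0 gt_eqF.
have sk0 : sk != 0 by rewrite sqrtC_eq0 gt_eqF.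
have sdc : sd^* = sd by rewrite conj_sqrt // ltW.
have skc : sk^* = sk by rewrite conj_sqrt // ltW.
pose s (j : option 'I_E) (ab : 'I_d * 'I_d) :=
  if j is Some k then (G k.+1 ab.2 ab.1)^* / sk else (ab.1 == ab.2)%:R / sd.
have sc : forall j ab, (s j ab)^* =
    if j is Some k then G k.+1 ab.2 ab.1 / sk else (ab.1 == ab.2)%:R / sd.
  move=> [k|] ab; rewrite /s rmorphM fmorphV /= ?conjCK ?skc //.
  by rewrite sdc rmorph_nat.
have trk : forall k : 'I_E, \sum_a G k.+1 a a = 0.
  move=> k; have hk : (1 <= k.+1 < d ^ 2)%N by have := ltn_ord k; rewrite /E; lia.
  by transitivity (\tr (G k.+1)); [rewrite /mxtrace | exact: trG].
have orthk : forall k k' : 'I_E,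
    \sum_a \sum_b (G k'.+1 b a)^* * G k.+1 b a = if k == k' then kappa else 0.
  move=> k k'.
  have hk : (1 <= k.+1 < d ^ 2)%N by have := ltn_ord k; rewrite /E; lia.
  have hk' : (1 <= k'.+1 < d ^ 2)%N by have := ltn_ord k'; rewrite /E; lia.
  have := orthG _ _ hk' hk; rewrite eqSS eq_sym => <-.
  rewrite /mxtrace; apply: eq_bigr => a _; rewrite !mxE; apply: eq_bigr => b _.
  by rewrite /adjmx !mxE.
have B := @bessel C ('I_d * 'I_d)%type (option 'I_E) s (fun ab => (v *m adjmx v) ab.1 ab.2).
have H1 : forall j j', j != j' -> \sum_i (s j i)^* * s j' i = 0.
  move=> [k|] [k'|] // ne.
  - transitivity ((\sum_a \sum_b (G k'.+1 b a)^* * G k.+1 b a) / (sk * sk)).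
      rewrite sum_pair mulr_suml; apply: eq_bigr => a _; rewrite mulr_suml.
      by apply: eq_bigr => b _; rewrite sc /s /= invfM; ring.
    have nk : k != k' by apply: contra ne => /eqP ->.
    by rewrite orthk (negPf nk) mul0r.
  - transitivity ((\sum_a \sum_b (a == b)%:R * G k.+1 b a) / (sk * sd)).
      rewrite sum_pair mulr_suml; apply: eq_bigr => a _; rewrite mulr_suml.
      by apply: eq_bigr => b _; rewrite sc /s /= invfM; ring.
    by under eq_bigr do rewrite sum_delta; rewrite trk mul0r.
  - transitivity ((\sum_a \sum_b (a == b)%:R * (G k'.+1 b a)^*) / (sk * sd)).
      rewrite sum_pair mulr_suml; apply: eq_bigr => a _; rewrite mulr_suml.
      by apply: eq_bigr => b _; rewrite sc /s /= invfM; ring.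
    under eq_bigr do rewrite sum_delta.
    by rewrite -rmorph_sum trk rmorph0 mul0r.
have H2 : forall j, \sum_i (s j i)^* * s j i = 1 \/ forall i, s j i = 0.
  move=> [k|]; left.
  - transitivity ((\sum_a \sum_b (G k.+1 b a)^* * G k.+1 b a) / (sk * sk)).
      rewrite sum_pair mulr_suml; apply: eq_bigr => a _; rewrite mulr_suml.
      by apply: eq_bigr => b _; rewrite sc /s /= invfM; ring.
    by rewrite orthk eqxx -expr2 sqrtCK divff // gt_eqF.
  - transitivity ((\sum_(a : 'I_d) \sum_(b : 'I_d) (a == b)%:R * (a == b)%:R) / (sd * sd)).
      rewrite sum_pair mulr_suml; apply: eq_bigr => a _; rewrite mulr_suml.
      by apply: eq_bigr => b _; rewrite sc /s /= invfM; ring.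
    under eq_bigr do rewrite sum_delta eqxx.
    by rewrite sumr_const card_ord -expr2 sqrtCK mulr1n -mulr_natr mul1r divff // gt_eqF.
have {B H1 H2} B := B H1 H2.
rewrite big_opt in B.
have psiaa : forall a, (v *m adjmx v) a a = `|v a 0| ^+ 2 by move=> a; rewrite psiE normCK.
have rhs1 : \sum_i `|(v *m adjmx v) i.1 i.2| ^+ 2 = 1.
  rewrite sum_pair -[RHS]mulr1 -{1}vn mulr_suml; apply: eq_bigr => a _.
  rewrite -vn mulr_sumr; apply: eq_bigr => b _.
  by rewrite /= psiE normrM exprMn norm_conjC.
have none : \sum_i (s None i)^* * (v *m adjmx v) i.1 i.2 = sd^-1.
  transitivity (\sum_a \sum_b (a == b)%:R * ((v *m adjmx v) a b / sd)).
    rewrite sum_pair; apply: eq_bigr => a _; apply: eq_bigr => b _.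
    by rewrite sc /=; ring.
  under eq_bigr do rewrite sum_delta psiaa.
  by rewrite -mulr_suml vn mul1r.
have some : forall k, \sum_i (s (Some k) i)^* * (v *m adjmx v) i.1 i.2 = t k / sk.
  move=> k; rewrite /t mulr_suml sum_pair; apply: eq_bigr => a _.
  rewrite mulr_suml; apply: eq_bigr => b _; rewrite sc /=; ring.
rewrite rhs1 none in B.
have nsd : `|sd^-1| ^+ 2 = (d%:R)^-1.
  by rewrite /sd norm_inv_sqrt // ler0n.
have nsk : forall x, `|x / sk| ^+ 2 = `|x| ^+ 2 / kappa.
  by move=> x; rewrite normrM exprMn /sk norm_inv_sqrt // ltW.
have e2 : \sum_k `|\sum_i (s (Some k) i)^* * (v *m adjmx v) i.1 i.2| ^+ 2 =
    \sum_k `|t k| ^+ 2 / kappa by apply: eq_bigr => k _; rewrite some nsk.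
rewrite e2 nsd in B.
have key : \sum_k `|t k| ^+ 2 / kappa <= 1 - (d%:R)^-1.
  by rewrite lerBrDl.
have dk0 : 0 <= (d%:R : C) / kappa by rewrite divr_ge0 ?ler0n ?(ltW kpos).
have -> : \sum_(k < E) `|d%:R / kappa * t k| ^+ 2 =
    (d%:R ^+ 2 / kappa) * \sum_k `|t k| ^+ 2 / kappa.
  rewrite mulr_sumr; apply: eq_bigr => k _.
  rewrite normrM ger0_norm // exprMn; ring.
apply: (le_trans (ler_wpM2l _ key)).
  by rewrite divr_ge0 ?exprn_ge0 ?ler0n ?(ltW kpos).
have dd : (d <= d ^ 2)%N by rewrite -mulnn leq_pmulr.
rewrite natrB // natrX le_eqVlt; apply/orP; left; apply/eqP.
have dn0 : (d%:R : C) != 0 by rewrite gt_eqF.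
have kn0 : kappa != 0 by rewrite gt_eqF.
by field; rewrite kn0 dn0.
Qed.
End B.

Section F.
Variable C : numClosedFieldType.

Lemma corr_sep N (d : 'I_N -> nat) (G : forall l : 'I_N, nat -> 'M[C]_(d l))
  (kappa : 'I_N -> C) (rho : midx d -> midx d -> C) M (p : 'I_M -> C)
  (psi : 'I_M -> forall l : 'I_N, 'M[C]_(d l)) :
  (forall J K, rho J K = \sum_(i < M) p i * \prod_(l < N) psi i l (J l) (K l)) ->
  forall j, corr_tensor G kappa rho j =
    \sum_(i < M) p i * \prod_l ((d l)%:R / kappa l *
        \sum_a \sum_b psi i l a b * G l (j l).+1 b a).
Proof.
move=> hrho j; rewrite /corr_tensor.
transitivity ((\prod_(l < N) (d l)%:R / \prod_(l < N) kappa l) *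
   \sum_(i < M) p i * \prod_l \sum_a \sum_b psi i l a b * G l (j l).+1 b a); last first.
  rewrite mulr_sumr; apply: eq_bigr => i _.
  rewrite mulrCA; congr (_ * _); rewrite big_split /= prodf_div //.
congr (_ * _).
transitivity (\sum_(i < M) p i * \sum_(J : midx d) \sum_(K : midx d)
    \prod_l (psi i l (J l) (K l) * G l (j l).+1 (K l) (J l))).
  under eq_bigr do under eq_bigr do rewrite hrho mulr_suml.
  under eq_bigr do rewrite exchange_big /=.
  rewrite exchange_big /=; apply: eq_bigr => i _.
  rewrite mulr_sumr; apply: eq_bigr => J _; rewrite mulr_sumr; apply: eq_bigr => K _.
  by rewrite big_split /= mulrA.
apply: eq_bigr => i _; congr (_ * _).
transitivity (\sum_(J : midx d) \prod_l \sum_b psi i l (J l) b * G l (j l).+1 b (J l)).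
  apply: eq_bigr => J _.
  exact: (sum_prod_midx (fun l b => psi i l (J l) b * G l (j l).+1 b (J l))).
exact: (sum_prod_midx (fun l a => \sum_b psi i l a b * G l (j l).+1 b a)).
Qed.

Lemma bigmax_le (I : finType) (P : pred I) (F : I -> C) (B : C) :
  0 <= B -> (forall i, P i -> F i <= B) -> \big[Num.max/0]_(i | P i) F i <= B.
Proof.
move=> B0 h; elim/big_ind: _ => // x y hx hy.
by rewrite maxElt; case: ifP.
Qed.

Lemma sqrtC_prod (I : finType) (f : I -> C) : (forall i, 0 <= f i) ->
  sqrtC (\prod_i f i) = \prod_i sqrtC (f i).
Proof.
move=> h.
have : sqrtC (\prod_i f i) = \prod_i sqrtC (f i) /\ 0 <= \prod_i f i.
  apply: (big_rec2 (fun y1 y2 => sqrtC y1 = y2 /\ 0 <= y1)).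
    by rewrite sqrtC1 ler01.
  move=> i y1 y2 _ [e y0]; split; last by rewrite mulr_ge0.
  by rewrite sqrtCM ?nnegrE // e.
by case.
Qed.

End F.

Theorem theorem6 (C : numClosedFieldType) (N : nat) (d : 'I_N -> nat)
  (G : forall l : 'I_N, nat -> 'M[C]_(d l)) (kappa : 'I_N -> C)
  (rho : midx d -> midx d -> C) :
  (2 <= N)%N ->
  (forall l, GM_basis (G l) (kappa l)) ->
  fully_separable rho ->
  tensor_trnorm (corr_tensor G kappa rho) <=
    \prod_(l < N) sqrtC ((d l ^ 2 - d l)%:R / kappa l).
Proof.
move=> _ hG [M [p [psi [p0 p1 hpsi hrho]]]].
set B := \prod_(l < N) sqrtC ((d l ^ 2 - d l)%:R / kappa l).
have kpos : forall l, 0 < kappa l.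
  by move=> l; case: (hG l) => _ _ _ _ k1; apply: lt_le_trans k1; exact: ltr01.
have bnd0 : forall l, 0 <= (d l ^ 2 - d l)%:R / kappa l.
  by move=> l; rewrite divr_ge0 ?ler0n ?ltW.
have B0 : 0 <= B by apply: prodr_ge0 => l _; rewrite sqrtC_ge0.
pose E := fun l => (d l ^ 2 - 1)%N.
pose x := fun (i : 'I_M) (l : 'I_N) (k : 'I_(E l)) =>
  (d l)%:R / kappa l * \sum_a \sum_b psi i l a b * G l k.+1 b a.
have bl : forall i l, \sum_(k < E l) `|x i l k| ^+ 2 <= (d l ^ 2 - d l)%:R / kappa l.
  by move=> i l; apply: bloch.
have hT := @corr_sep C N d G kappa rho M p psi hrho.
pose h := fun (i : 'I_M) (j : midx E) => \prod_l x i l (j l).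
rewrite /tensor_trnorm.
apply: bigmax_le => // R _; apply: bigmax_le => // n' _; apply: bigmax_le => // m' _.
have hn : (n'.+1 <= #|R|)%N by [].
have hm : (m'.+1 <= #|~: R|)%N by [].
set T := corr_tensor G kappa rho.
have -> : mixed_unfolding T R n'.+1 m'.+1 =
    \matrix_(pp, qq) \sum_i p i * Zc R n'.+1 m'.+1 (h i) pp qq.
  apply/matrixP => pp qq; rewrite !mxE.
  rewrite (eq_bigr (fun j => \sum_i p i * h i j)); last by move=> j _; rewrite /T hT.
  rewrite exchange_big /=; apply: eq_bigr => i _.
  by rewrite /Zc mulr_sumr.
refine (le_trans (trnorm_le_rank1 _) _).
  move=> i pp qq pp' qq'.
  by rewrite mulrACA (Zc_rank1 hn hm (x i)) mulrACA.
apply: (@le_trans _ _ (\sum_i p i * B)); last by rewrite -mulr_suml p1 mul1r.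
apply: ler_sum => i _.
set S := \sum_(pp : 'I_(\prod_(r in R) E r)) \sum_(qq : 'I_(\prod_(c in ~: R) E c))
   `|Zc R n'.+1 m'.+1 (h i) pp qq| ^+ 2.
have S0 : 0 <= S by apply: sumr_ge0 => pp _; apply: sum_norm2_ge0.
have -> : \sum_(pp : 'I_(\prod_(r in R) E r)) \sum_(qq : 'I_(\prod_(c in ~: R) E c))
    `|p i * Zc R n'.+1 m'.+1 (h i) pp qq| ^+ 2 = p i ^+ 2 * S.
  rewrite /S mulr_sumr; apply: eq_bigr => pp _; rewrite mulr_sumr.
  by apply: eq_bigr => qq _; rewrite normrM exprMn ger0_norm.
rewrite sqrtCM ?nnegrE ?exprn_ge0 // sqrCK //.
apply: ler_wpM2l => //.
have SB : S <= \prod_l ((d l ^ 2 - d l)%:R / kappa l).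
  apply: (le_trans (Zc_frob hn hm _ _ _)).
  have -> : \sum_j `|h i j| ^+ 2 = \prod_l \sum_(k < E l) `|x i l k| ^+ 2.
    rewrite -(sum_prod_midx (fun l k => `|x i l k| ^+ 2)).
    by apply: eq_bigr => j _; rewrite /h normr_prod -prodrXl.
  apply: ler_prod => l _; rewrite bl andbT.
  exact: sum_norm2_ge0.
rewrite /B -sqrtC_prod // ler_sqrtC ?nnegrE //.
by apply: prodr_ge0 => l _.
Qed.
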